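(* Let $\lambda>0$, $\ell>0$, let $\gamma$ be one of $\gamma_{\rm sarc}^{\lambda,\ell,1}$, $\gamma_{\rm larc}^{\lambda,\ell,1}$ (these two when $\lambda\ell^2\le\hat\lambda$), or $\gamma_{\rm loop}^{\lambda,\ell,1}$, and let $L:=L[\gamma]$. Writing $\gamma=(X,Y)$, one has $X(s)+X(L-s)=\ell$ and $Y(s)=Y(L-s)$ for all $s\in[0,L]$. In addition, if $\gamma=\gamma_{\rm loop}^{\lambda,\ell,1}$, then $\gamma$ has a self-intersection: there is $s\in(0,L/2)$ with $\gamma(s)=\gamma(L-s)$.
   Context: Elliptic functions: for $q\in[0,1)$, $x\in\mathbb{R}$, $\mathrm{F}(x,q)=\int_0^x(1-q^2\sin^2\theta)^{-1/2}\,d\theta$, $\mathrm{E}(x,q)=\int_0^x(1-q^2\sin^2\theta)^{1/2}\,d\theta$, $\mathrm{K}(q)=\mathrm{F}(\pi/2,q)$, $\mathrm{E}(q)=\mathrm{E}(\pi/2,q)$; $\mathrm{am}(\cdot,q)$ is the inverse of $x\mapsto\mathrm{F}(x,q)$, $\mathrm{cn}(x,q)=\cos\mathrm{am}(x,q)$. The function $q\mapsto2\mathrm{E}(q)-\mathrm{K}(q)$ is strictly decreasing on $[0,1)$ with unique zero $q_*\in(0,1)$. On $[1/\sqrt2,1)$ let $f(q)=(4q^4-5q^2+1)\mathrm{K}(q)+(-8q^4+8q^2-1)\mathrm{E}(q)$ and $g(q)=8(2\mathrm{E}(q)-\mathrm{K}(q))^2(2q^2-1)$. $f$ has a unique zero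 $\hat q\in[1/\sqrt2,1)$; $\hat\lambda:=g(\hat q)\approx0.70107$. $g(1/\sqrt2)=0$, $g$ is strictly increasing on $[1/\sqrt2,\hat q]$, strictly decreasing on $[\hat q,q_*]$ with $g(q_* )=0$, strictly increasing on $[q_*,1)$ with $g\to\infty$ at $1$. For $c\in(0,\hat\lambda]$ let $q_1(c)\in(1/\sqrt2,\hat q]$, $q_2(c)\in[\hat q,q_* )$ solve $g(q)=c$; for $c>0$ let $q_3(c)\in(q_*,1)$ solve $g(q)=c$. Curves (arclength parametrized on $[0,2\mathrm{K}(q)/\alpha]$, so $L=2\mathrm{K}(q)/\alpha$): $\gamma_{\rm sarc}^{\lambda,\ell,1}(s)=\frac1\alpha\big(2\mathrm{E}(\mathrm{am}(\alpha s-\mathrm{K}(q),q),q)+2\mathrm{E}(q)-\alpha s,\ 2q\,\mathrm{cn}(\alpha s-\mathrm{K}(q),q)\big)$ with $q=q_1(\lambda\ell^2)$, $\alpha=\frac{2}{\ell}(2\mathrm{E}(q)-\mathrm{K}(q))$; $\gamma_{\rm larc}^{\lambda,\ell,1}$ is the same formula with $q=q_2(\lambda\ell^2)$; $\gamma_{\rm loop}^{\lambda,\ell,1}(s)=\frac1\alpha\big(-2\mathrm{E}(\mathrm{am}(\alpha s-\mathrm{K}(q),q),q)-2\mathrm{E}(q)+\alpha s,\ 2q\,\mathrm{cn}(\alpha s-\mathrm{K}(q),q)\big)$ with $q=q_3(\lambda\ell^2)$, $\alpha=\frac{2}{\ell}(\mathrm{K}(q)-2\mathrm{E}(q))$. 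*)

(* Defs.v *)
From Stdlib Require Import Reals ClassicalEpsilon.
From Coquelicot Require Import Coquelicot.
Open Scope R_scope.

Definition ellF (x q : R) : R :=
  RInt (fun t => / sqrt (1 - q^2 * (sin t)^2)) 0 x.
Definition ellE (x q : R) : R :=
  RInt (fun t => sqrt (1 - q^2 * (sin t)^2)) 0 x.
Definition ellK (q : R) : R := ellF (PI/2) q.
Definition ellEc (q : R) : R := ellE (PI/2) q.

(* Jacobi amplitude: the inverse of x |-> F(x,q)
   (F(.,q) is a strictly increasing bijection of R for 0 <= q < 1). *)
Definition am (u q : R) : R :=
  epsilon (inhabits 0) (fun x => ellF x q = u).
Definition cn (u q : R) : R := cos (am u q).

Definition qstar : R :=
  epsilon (inhabits 0) (fun q => 0 < q < 1 /\ 2 * ellEc q - ellK q = 0).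

Definition ff (q : R) : R :=
  (4 * q^4 - 5 * q^2 + 1) * ellK q + (-8 * q^4 + 8 * q^2 - 1) * ellEc q.
Definition gg (q : R) : R :=
  8 * (2 * ellEc q - ellK q)^2 * (2 * q^2 - 1).

Definition qhat : R :=
  epsilon (inhabits 0) (fun q => 1 / sqrt 2 <= q < 1 /\ ff q = 0).
Definition lamhat : R := gg qhat.

Definition q1 (c : R) : R :=
  epsilon (inhabits 0) (fun q => 1 / sqrt 2 < q <= qhat /\ gg q = c).
Definition q2 (c : R) : R :=
  epsilon (inhabits 0) (fun q => qhat <= q < qstar /\ gg q = c).
Definition q3 (c : R) : R :=
  epsilon (inhabits 0) (fun q => qstar < q < 1 /\ gg q = c).

Definition arc_curve (q alpha s : R) : R * R :=
  ( / alpha * (2 * ellE (am (alpha * s - ellK q) q) q + 2 * ellEc q - alpha * s),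
    / alpha * (2 * q * cn (alpha * s - ellK q) q) ).
Definition loop_curve (q alpha s : R) : R * R :=
  ( / alpha * (- 2 * ellE (am (alpha * s - ellK q) q) q - 2 * ellEc q + alpha * s),
    / alpha * (2 * q * cn (alpha * s - ellK q) q) ).

Definition alpha_arc (q l : R) : R := 2 / l * (2 * ellEc q - ellK q).
Definition alpha_loop (q l : R) : R := 2 / l * (ellK q - 2 * ellEc q).

(* gamma_sarc^{lambda,l,1}, gamma_larc^{lambda,l,1}, gamma_loop^{lambda,l,1}:
   each returned as (q, alpha), the curve being s |-> *_curve q alpha s
   on [0, 2 K(q) / alpha]. *)
Definition sarc_q (lam l : R) : R := q1 (lam * l^2).
Definition larc_q (lam l : R) : R := q2 (lam * l^2).
Definition loop_q (lam l : R) : R := q3 (lam * l^2).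

Definition gamma_sarc (lam l s : R) : R * R :=
  arc_curve (sarc_q lam l) (alpha_arc (sarc_q lam l) l) s.
Definition gamma_larc (lam l s : R) : R * R :=
  arc_curve (larc_q lam l) (alpha_arc (larc_q lam l) l) s.
Definition gamma_loop (lam l s : R) : R * R :=
  loop_curve (loop_q lam l) (alpha_loop (loop_q lam l) l) s.

Definition L_sarc (lam l : R) : R :=
  2 * ellK (sarc_q lam l) / alpha_arc (sarc_q lam l) l.
Definition L_larc (lam l : R) : R :=
  2 * ellK (larc_q lam l) / alpha_arc (larc_q lam l) l.
Definition L_loop (lam l : R) : R :=
  2 * ellK (loop_q lam l) / alpha_loop (loop_q lam l) l.

Definition symmetric_curve (gamma : R -> R * R) (L l : R) : Prop :=
  forall s, 0 <= s <= L ->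
    fst (gamma s) + fst (gamma (L - s)) = l /\ snd (gamma s) = snd (gamma (L - s)).

(* Main.v *)
Require Import Defs.
From Stdlib Require Import Reals ClassicalEpsilon Lra Psatz.
From Coquelicot Require Import Coquelicot.
Open Scope R_scope.

Section Gen.
Variable f : R -> R.
Hypothesis fc : forall t, continuous f t.

Lemma G_ex a b : ex_RInt f a b.
Proof. apply (@ex_RInt_continuous R_CompleteNormedModule); intros; apply fc. Qed.

Lemma G_chasles x y : RInt f 0 y - RInt f 0 x = RInt f x y.
Proof.
  rewrite <- (RInt_Chasles f 0 x y) by apply G_ex.
  unfold plus; simpl; ring.
Qed.

Lemma G_lb m x y : (forall t, x <= t <= y -> m <= f t) -> x <= y -> m * (y - x) <= RInt f x y.
Proof.
  intros H Hxy.
  replace (m * (y - x)) with (RInt (fun _ => m) x y).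
  - apply RInt_le; auto. apply ex_RInt_const. apply G_ex. intros; apply H; lra.
  - rewrite RInt_const. unfold scal; simpl; unfold mult; simpl; ring.
Qed.

Lemma G_ub m x y : (forall t, x <= t <= y -> f t <= m) -> x <= y -> RInt f x y <= m * (y - x).
Proof.
  intros H Hxy.
  replace (m * (y - x)) with (RInt (fun _ => m) x y).
  - apply RInt_le; auto. apply G_ex. apply ex_RInt_const. intros; apply H; lra.
  - rewrite RInt_const. unfold scal; simpl; unfold mult; simpl; ring.
Qed.

Lemma G_even_odd x : (forall t, f (- t) = f t) -> RInt f 0 (- x) = - RInt f 0 x.
Proof.
  intros He.
  assert (H := is_RInt_comp_opp f 0 x (RInt f 0 (-x))).
  rewrite Ropp_0 in H.
  assert (H2 : is_RInt (fun y => opp (f (- y))) 0 x (RInt f 0 (- x))).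
  { apply H. apply (@RInt_correct R_CompleteNormedModule), G_ex. }
  rewrite <- (is_RInt_unique _ _ _ _ H2).
  assert (E := RInt_opp f 0 x (G_ex 0 x)). unfold opp in E; simpl in E.
  unfold opp; simpl. rewrite <- E. apply RInt_ext. intros; rewrite He; auto.
Qed.

End Gen.

Lemma lip_cont g x0 r M : 0 < r -> 0 <= M ->
  (forall x, Rabs (x - x0) < r -> Rabs (g x - g x0) <= M * Rabs (x - x0)) ->
  continuity_pt g x0.
Proof.
  intros Hr HM H. unfold continuity_pt, continue_in, limit1_in, limit_in.
  intros eps Heps. exists (Rmin r (eps / (M + 1))). split.
  - apply Rmin_pos; auto. apply Rdiv_lt_0_compat; lra.
  - intros x [_ Hx]. simpl in *. unfold Rdist in *.
    assert (Hx1 : Rabs (x - x0) < r) by (eapply Rlt_le_trans; [apply Hx| apply Rmin_l]).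
    assert (Hx2 : Rabs (x - x0) < eps / (M + 1)) by (eapply Rlt_le_trans; [apply Hx| apply Rmin_r]).
    eapply Rle_lt_trans. apply H; auto.
    apply Rle_lt_trans with ((M+1) * Rabs (x - x0)).
    + assert (0 <= Rabs (x - x0)) by apply Rabs_pos. nra.
    + apply Rmult_lt_reg_r with (/ (M+1)). apply Rinv_0_lt_compat; lra.
      replace ((M + 1) * Rabs (x - x0) * / (M + 1)) with (Rabs (x - x0)) by (field; lra).
      exact Hx2.
Qed.

Lemma ivt_up f a b c : a <= b -> (forall x, a <= x <= b -> continuity_pt f x) ->
  f a <= c <= f b -> exists x, a <= x <= b /\ f x = c.
Proof.
  intros Hab Hc [H1 H2].
  destruct (Req_dec (f a) c) as [E|E]. { exists a; split; [lra|auto]. }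
  destruct (Req_dec (f b) c) as [E'|E']. { exists b; split; [lra|auto]. }
  assert (a < b). { destruct (Req_dec a b); [subst; lra| lra]. }
  destruct (Ranalysis5.IVT_interv (fun x => f x - c) a b) as [z [Hz1 Hz2]]; auto.
  - intros y Hy. apply continuity_pt_minus with (f1 := f) (f2 := fun _ => c).
    apply Hc; auto. apply continuity_pt_const. intros u v; auto.
  - lra.
  - lra.
  - exists z; split; auto; lra.
Qed.

Lemma ivt_down f a b c : a <= b -> (forall x, a <= x <= b -> continuity_pt f x) ->
  f b <= c <= f a -> exists x, a <= x <= b /\ f x = c.
Proof.
  intros Hab Hc H.
  destruct (ivt_up (fun x => - f x) a b (- c)) as [x [Hx1 Hx2]]; auto.
  - intros; apply continuity_pt_opp; auto.
  - lra.
  - exists x; split; auto; lra.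
Qed.

Definition dn2 q t := 1 - q^2 * (sin t)^2.
Definition fK q t := / sqrt (1 - q^2 * (sin t)^2).
Definition fE q t := sqrt (1 - q^2 * (sin t)^2).

Lemma sin2_le1 t : 0 <= (sin t)^2 <= 1.
Proof. pose proof (SIN_bound t). split; nra. Qed.

Lemma dn2_bnd q t : q^2 < 1 -> 1 - q^2 <= 1 - q^2 * (sin t)^2 <= 1.
Proof. intros. pose proof (sin2_le1 t). assert (0 <= q^2) by nra. split; nra. Qed.

Lemma fK_cont q t : q^2 < 1 -> continuous (fK q) t.
Proof.
  intros Hq. apply (@ex_derive_continuous R_AbsRing R_NormedModule). unfold fK.
  pose proof (dn2_bnd q t Hq).
  auto_derive. split. lra. split; auto. apply Rgt_not_eq, sqrt_lt_R0. lra.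
Qed.

Lemma fE_cont q t : q^2 < 1 -> continuous (fE q) t.
Proof.
  intros Hq. apply (@ex_derive_continuous R_AbsRing R_NormedModule). unfold fE.
  pose proof (dn2_bnd q t Hq).
  auto_derive. lra.
Qed.

Lemma sqrt_ge_self x : 0 <= x <= 1 -> x <= sqrt x.
Proof.
  intros [H1 H2]. rewrite <- (sqrt_square x) at 1 by lra.
  apply sqrt_le_1_alt. nra.
Qed.

Lemma fK_ge1 q t : q^2 < 1 -> 1 <= fK q t.
Proof.
  intros Hq. unfold fK. pose proof (dn2_bnd q t Hq).
  assert (0 < sqrt (1 - q ^ 2 * sin t ^ 2)) by (apply sqrt_lt_R0; lra).
  assert (sqrt (1 - q ^ 2 * sin t ^ 2) <= 1) by (apply Rle_trans with (sqrt 1); [apply sqrt_le_1_alt; lra | rewrite sqrt_1; lra]).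
  apply Rle_trans with (/ 1). rewrite Rinv_1; lra. apply Rinv_le_contravar; auto.
Qed.

Lemma fK_le q t : q^2 < 1 -> fK q t <= / sqrt (1 - q^2).
Proof.
  intros Hq. unfold fK. pose proof (dn2_bnd q t Hq).
  apply Rinv_le_contravar. apply sqrt_lt_R0; lra. apply sqrt_le_1_alt; lra.
Qed.

Lemma fE_bnd q t : q^2 < 1 -> 0 <= fE q t <= 1.
Proof.
  intros Hq. unfold fE. pose proof (dn2_bnd q t Hq). split. apply sqrt_pos.
  apply Rle_trans with (sqrt 1); [apply sqrt_le_1_alt; lra | rewrite sqrt_1; lra].
Qed.

Lemma fK_even q t : fK q (- t) = fK q t.
Proof. unfold fK. rewrite sin_neg. f_equal. f_equal. ring. Qed.
Lemma fE_even q t : fE q (- t) = fE q t.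
Proof. unfold fE. rewrite sin_neg. f_equal. ring. Qed.

Lemma ellF_eq x q : ellF x q = RInt (fK q) 0 x.
Proof. reflexivity. Qed.
Lemma ellE_eq x q : ellE x q = RInt (fE q) 0 x.
Proof. reflexivity. Qed.

Section Fixq.
Variable q : R.
Hypothesis Hq : q^2 < 1.

Lemma F_odd x : ellF (- x) q = - ellF x q.
Proof. rewrite !ellF_eq. apply G_even_odd. intros; apply fK_cont; auto. apply fK_even. Qed.
Lemma E_odd x : ellE (- x) q = - ellE x q.
Proof. rewrite !ellE_eq. apply G_even_odd. intros; apply fE_cont; auto. apply fE_even. Qed.

Lemma F_diff x y : x <= y -> y - x <= ellF y q - ellF x q.
Proof.
  intros. rewrite !ellF_eq. rewrite G_chasles by (intros; apply fK_cont; auto).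
  replace (y - x) with (1 * (y - x)) by ring. apply G_lb; auto.
  intros; apply fK_cont; auto. intros; apply fK_ge1; auto.
Qed.

Lemma F_diff_ub x y : x <= y -> ellF y q - ellF x q <= / sqrt (1 - q^2) * (y - x).
Proof.
  intros. rewrite !ellF_eq. rewrite G_chasles by (intros; apply fK_cont; auto).
  apply G_ub; auto. intros; apply fK_cont; auto. intros; apply fK_le; auto.
Qed.

Lemma F_lt x y : x < y -> ellF x q < ellF y q.
Proof. intros. pose proof (F_diff x y). lra. Qed.

Lemma F_inj x y : ellF x q = ellF y q -> x = y.
Proof.
  intros H. destruct (Rtotal_order x y) as [h|[h|h]]; auto.
  apply F_lt in h; lra. apply F_lt in h; lra.
Qed.

Lemma F_cont x0 : continuity_pt (fun x => ellF x q) x0.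
Proof.
  apply lip_cont with 1 (/ sqrt (1 - q^2)). lra.
  left. apply Rinv_0_lt_compat, sqrt_lt_R0; lra.
  intros x _. destruct (Rle_dec x0 x).
  - pose proof (F_diff x0 x r). pose proof (F_diff_ub x0 x r).
    rewrite !Rabs_right by lra. lra.
  - pose proof (F_diff x x0 ltac:(lra)). pose proof (F_diff_ub x x0 ltac:(lra)).
    rewrite (Rabs_left (x - x0)) by lra. rewrite Rabs_left1 by lra. lra.
Qed.

Lemma E_diff x y : x <= y -> 0 <= ellE y q - ellE x q <= y - x.
Proof.
  intros. rewrite !ellE_eq. rewrite G_chasles by (intros; apply fE_cont; auto).
  split.
  - replace 0 with (0 * (y - x)) by ring. apply G_lb; auto.
    intros; apply fE_cont; auto. intros; apply fE_bnd; auto.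
  - replace (y - x) with (1 * (y - x)) by ring. apply G_ub; auto.
    intros; apply fE_cont; auto. intros; apply fE_bnd; auto.
Qed.

Lemma E_cont x0 : continuity_pt (fun x => ellE x q) x0.
Proof.
  apply lip_cont with 1 1. lra. lra.
  intros x _. destruct (Rle_dec x0 x).
  - pose proof (E_diff x0 x r). rewrite !Rabs_right by lra. lra.
  - pose proof (E_diff x x0 ltac:(lra)).
    rewrite (Rabs_left (x - x0)) by lra. rewrite Rabs_left1 by lra. lra.
Qed.

Lemma F_0 : ellF 0 q = 0.
Proof. rewrite ellF_eq. apply (@RInt_point R_CompleteNormedModule). Qed.
Lemma E_0 : ellE 0 q = 0.
Proof. rewrite ellE_eq. apply (@RInt_point R_CompleteNormedModule). Qed.

Lemma am_spec u : ellF (am u q) q = u.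
Proof.
  unfold am. apply epsilon_spec.
  destruct (ivt_up (fun x => ellF x q) (- Rabs u) (Rabs u) u) as [x [_ Hx]].
  - pose proof (Rabs_pos u); lra.
  - intros; apply F_cont.
  - rewrite F_odd. pose proof (F_diff 0 (Rabs u) (Rabs_pos u)). rewrite F_0 in H.
    pose proof (Rle_abs u). pose proof (Rle_abs (- u)). rewrite Rabs_Ropp in H1. lra.
  - exists x; auto.
Qed.

Lemma am_F x : am (ellF x q) q = x.
Proof. apply F_inj. apply am_spec. Qed.

Lemma am_odd u : am (- u) q = - am u q.
Proof. apply F_inj. rewrite am_spec, F_odd, am_spec. auto. Qed.

End Fixq.

Lemma cpt_plus f g x : continuity_pt f x -> continuity_pt g x -> continuity_pt (fun y => f y + g y) x.
Proof. intros; exact (continuity_pt_plus f g x H H0). Qed.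
Lemma cpt_minus f g x : continuity_pt f x -> continuity_pt g x -> continuity_pt (fun y => f y - g y) x.
Proof. intros; exact (continuity_pt_minus f g x H H0). Qed.
Lemma cpt_mult f g x : continuity_pt f x -> continuity_pt g x -> continuity_pt (fun y => f y * g y) x.
Proof. intros; exact (continuity_pt_mult f g x H H0). Qed.
Lemma cpt_const c x : continuity_pt (fun _ => c) x.
Proof. apply continuity_pt_const. intros u v; auto. Qed.
Lemma cpt_id x : continuity_pt (fun y => y) x.
Proof. apply derivable_continuous_pt, derivable_pt_id. Qed.

Lemma arc_sym q l : q^2 < 1 -> 0 < l -> 2 * ellEc q - ellK q <> 0 ->
  symmetric_curve (arc_curve q (alpha_arc q l)) (2 * ellK q / alpha_arc q l) l.
Proof.
  intros Hq Hl HD s _.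
  assert (Ha : alpha_arc q l <> 0).
  { unfold alpha_arc. apply Rmult_integral_contrapositive_currified; auto.
    unfold Rdiv. apply Rmult_integral_contrapositive_currified. lra. apply Rinv_neq_0_compat; lra. }
  set (a := alpha_arc q l) in *.
  assert (E1 : a * (2 * ellK q / a - s) - ellK q = - (a * s - ellK q)) by (field; auto).
  unfold arc_curve, cn; simpl. rewrite E1, am_odd, E_odd, cos_neg by auto.
  split; [|reflexivity].
  unfold a, alpha_arc in *. field. split; auto. lra.
Qed.

Lemma loop_sym q l : q^2 < 1 -> 0 < l -> ellK q - 2 * ellEc q <> 0 ->
  symmetric_curve (loop_curve q (alpha_loop q l)) (2 * ellK q / alpha_loop q l) l.
Proof.
  intros Hq Hl HD s _.
  assert (Ha : alpha_loop q l <> 0).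
  { unfold alpha_loop. apply Rmult_integral_contrapositive_currified; auto.
    unfold Rdiv. apply Rmult_integral_contrapositive_currified. lra. apply Rinv_neq_0_compat; lra. }
  set (a := alpha_loop q l) in *.
  assert (E1 : a * (2 * ellK q / a - s) - ellK q = - (a * s - ellK q)) by (field; auto).
  unfold loop_curve, cn; simpl. rewrite E1, am_odd, E_odd, cos_neg by auto.
  split; [|reflexivity].
  unfold a, alpha_loop in *. field. split; auto. lra.
Qed.

Lemma sin2_small t : -1/2 <= t <= 0 -> (sin t)^2 <= 1/4.
Proof.
  intros Ht. destruct (Req_dec t 0) as [->|Hne]. rewrite sin_0; lra.
  assert (h1 := sin_lt_x (- t) ltac:(lra)). rewrite sin_neg in h1.
  assert (h2 := sin_lt_0_var t ltac:(pose proof PI2_1; lra) ltac:(lra)).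
  nra.
Qed.

Lemma K_F q : ellK q = ellF (PI/2) q.
Proof. reflexivity. Qed.
Lemma Ec_E q : ellEc q = ellE (PI/2) q.
Proof. reflexivity. Qed.

Lemma loop_cross q l : q^2 < 1 -> 0 < l -> 0 < ellK q - 2 * ellEc q ->
  exists s, 0 < s < 2 * ellK q / alpha_loop q l / 2 /\
    loop_curve q (alpha_loop q l) s = loop_curve q (alpha_loop q l) (2 * ellK q / alpha_loop q l - s).
Proof.
  intros Hq Hl HD.
  assert (Ha : 0 < alpha_loop q l).
  { unfold alpha_loop. apply Rmult_lt_0_compat; auto. apply Rdiv_lt_0_compat; lra. }
  set (a := alpha_loop q l) in *.
  assert (Hal : / a * (ellK q - 2 * ellEc q) = l / 2).
  { unfold a, alpha_loop. field. lra. }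
  set (G := fun p => / a * (-2 * ellE p q - 2 * ellEc q + ellF p q + ellK q)).
  assert (HGc : forall p, continuity_pt G p).
  { intros p. unfold G. apply cpt_mult. apply cpt_const.
    apply cpt_plus; [|apply cpt_const]. apply cpt_plus; [|apply F_cont; auto].
    apply cpt_minus; [|apply cpt_const]. apply cpt_mult. apply cpt_const. apply E_cont; auto. }
  pose proof PI2_1 as HPI.
  assert (HG0 : G (- (PI/2)) = 0).
  { unfold G. rewrite F_odd, E_odd by auto. rewrite <- K_F, <- Ec_E. ring. }
  assert (HG1 : l / 2 < G (- (1/2))).
  { unfold G. rewrite <- Hal. apply Rmult_lt_compat_l. apply Rinv_0_lt_compat; auto.
    (* F(-1/2) - 2 E(-1/2) > 0 *)
    rewrite F_odd, E_odd by auto.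
    assert (H1 : ellF (1/2) q <= 20/17 * (1/2)).
    { pose proof (F_diff_ub q Hq) as _.
      rewrite ellF_eq. replace (RInt (fK q) 0 (1/2)) with (RInt (fK q) 0 (1/2) - RInt (fK q) 0 0).
      2:{ rewrite (@RInt_point R_CompleteNormedModule). unfold zero; simpl; ring. }
      rewrite G_chasles by (intros; apply fK_cont; auto).
      replace (1/2) with (1/2 - 0) at 2 by ring. apply G_ub; [intros; apply fK_cont; auto| |lra].
      intros t Ht. unfold fK.
      assert (hs : (sin t)^2 <= 1/4).
      { replace (sin t ^ 2) with (sin (- t) ^ 2) by (rewrite sin_neg; ring).
        apply sin2_small; lra. }
      assert (0 <= q^2) by nra.
      assert (hx : 3/4 <= 1 - q ^ 2 * sin t ^ 2) by nra.
      assert (17/20 <= sqrt (1 - q ^ 2 * sin t ^ 2)).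
      { rewrite <- (sqrt_square (17/20)) by lra. apply sqrt_le_1_alt. lra. }
      replace (20/17) with (/ (17/20)) by field. apply Rinv_le_contravar; lra. }
    assert (H2 : 17/20 * (1/2) <= ellE (1/2) q).
    { rewrite ellE_eq. replace (RInt (fE q) 0 (1/2)) with (RInt (fE q) 0 (1/2) - RInt (fE q) 0 0).
      2:{ rewrite (@RInt_point R_CompleteNormedModule). unfold zero; simpl; ring. }
      rewrite G_chasles by (intros; apply fE_cont; auto).
      replace (17/20*(1/2)) with (17/20*(1/2 - 0)) by ring. apply G_lb; [intros; apply fE_cont; auto| |lra].
      intros t Ht. unfold fE.
      assert (hs : (sin t)^2 <= 1/4).
      { replace (sin t ^ 2) with (sin (- t) ^ 2) by (rewrite sin_neg; ring).
        apply sin2_small; lra. }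
      assert (0 <= q^2) by nra.
      assert (hx : 3/4 <= 1 - q ^ 2 * sin t ^ 2) by nra.
      rewrite <- (sqrt_square (17/20)) by lra. apply sqrt_le_1_alt. lra. }
    lra. }
  destruct (ivt_up G (- (PI/2)) (- (1/2)) (l/2)) as [p [Hp HGp]].
  - lra.
  - intros; apply HGc.
  - lra.
  - assert (Hp1 : - (PI/2) < p).
    { destruct (Req_dec p (- (PI/2))) as [E|E]. rewrite E in HGp; lra. lra. }
    assert (Hs0 : 0 < (ellF p q + ellK q) / a < 2 * ellK q / a / 2).
    { split.
      * apply Rdiv_lt_0_compat; auto. pose proof (F_lt q Hq _ _ Hp1).
        rewrite F_odd in H by auto. rewrite <- K_F in H. lra.
      * pose proof (F_lt q Hq p 0 ltac:(lra)). rewrite F_0 in H by auto.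
        apply Rmult_lt_reg_r with a; auto. field_simplify; try lra. }
    assert (HK : 0 < ellK q).
    { pose proof (F_lt q Hq 0 (PI/2) ltac:(lra)). rewrite F_0 in H by auto. rewrite K_F; lra. }
    assert (HL : 2 * ellK q / a / 2 < 2 * ellK q / a).
    { assert (0 < 2 * ellK q / a) by (apply Rdiv_lt_0_compat; lra). lra. }
    exists ((ellF p q + ellK q) / a). split; [exact Hs0|].
    assert (HD' : ellK q - 2 * ellEc q <> 0) by (intro; lra).
    assert (Hsym := loop_sym q l Hq Hl HD' ((ellF p q + ellK q) / a)).
    fold a in Hsym. specialize (Hsym ltac:(split; lra)).
    assert (Hx : fst (loop_curve q a ((ellF p q + ellK q) / a)) = l / 2).
    { unfold loop_curve; simpl.
      replace (a * ((ellF p q + ellK q) / a) - ellK q) with (ellF p q) by (field; lra).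
      rewrite am_F by auto. rewrite <- HGp. unfold G. field. lra. }
    destruct Hsym as [Hs1 Hs2].
    destruct (loop_curve q a ((ellF p q + ellK q) / a)) as [x1 y1] eqn:E1.
    destruct (loop_curve q a (2 * ellK q / a - (ellF p q + ellK q) / a)) as [x2 y2] eqn:E2.
    simpl in *. f_equal; lra.
Qed.

Lemma RInt_lin (f g : R -> R) (c a b : R) : (forall t, continuous f t) -> (forall t, continuous g t) ->
  RInt (fun t => c * f t - g t) a b = c * RInt f a b - RInt g a b.
Proof.
  intros Hf Hg.
  assert (Ef : ex_RInt f a b) by exact (G_ex f Hf a b).
  assert (Eg : ex_RInt g a b) by exact (G_ex g Hg a b).
  assert (Ecf : ex_RInt (fun t => scal c (f t)) a b) by exact (@ex_RInt_scal R_NormedModule f a b c Ef).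
  assert (H1 := RInt_minus (fun t => scal c (f t)) g a b Ecf Eg).
  assert (H2 := RInt_scal f a b c Ef).
  unfold minus, plus, opp, scal in *; simpl in *. unfold mult in *; simpl in *.
  transitivity (RInt (fun x => c * f x + - g x) a b).
  apply RInt_ext; intros x _; simpl; ring.
  rewrite H1, H2. ring.
Qed.

Lemma cont_lin (f g : R -> R) c : (forall t, continuous f t) -> (forall t, continuous g t) ->
  forall t, continuous (fun t => c * f t - g t) t.
Proof.
  intros Hf Hg t. apply continuity_pt_filterlim.
  apply cpt_minus. apply cpt_mult. apply cpt_const. apply continuity_pt_filterlim, Hf.
  apply continuity_pt_filterlim, Hg.
Qed.

Lemma Rabs_sq_diff A B m : 0 < m -> m <= A -> m <= B -> Rabs (A - B) * (2 * m) <= Rabs (A*A - B*B).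
Proof.
  intros. replace (A*A - B*B) with ((A - B) * (A + B)) by ring.
  rewrite Rabs_mult. rewrite (Rabs_right (A+B)) by lra.
  apply Rmult_le_compat_l. apply Rabs_pos. lra.
Qed.

Lemma Rabs_inv_diff A B m : 0 < m -> m <= A -> m <= B -> Rabs (/A - /B) <= Rabs (A - B) / (m*m).
Proof.
  intros. replace (/A - /B) with ((B - A) / (A * B)) by (field; lra).
  unfold Rdiv. rewrite Rabs_mult. rewrite Rabs_minus_sym.
  apply Rmult_le_compat_l. apply Rabs_pos.
  assert (0 < m * m) by (apply Rmult_lt_0_compat; lra).
  assert (m * m <= A * B) by (apply Rmult_le_compat; lra).
  rewrite Rabs_right. apply Rinv_le_contravar; auto.
  left. apply Rinv_0_lt_compat. lra.
Qed.

Section Lip.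
Variables r q q' t : R.
Hypothesis Hr : 0 <= r < 1.
Hypothesis Hq : Rabs q <= r.
Hypothesis Hq' : Rabs q' <= r.

Let m := 1 - r^2.

Lemma sq_le : q^2 <= r^2 /\ q'^2 <= r^2.
Proof.
  rewrite <- (pow2_abs q), <- (pow2_abs q').
  pose proof (Rabs_pos q); pose proof (Rabs_pos q'). split; nra.
Qed.

Lemma x_bnd : 1 - r^2 <= 1 - q^2 * (sin t)^2 <= 1 /\ 1 - r^2 <= 1 - q'^2 * (sin t)^2 <= 1.
Proof.
  pose proof sq_le. pose proof (sin2_le1 t). assert (0 <= q^2) by nra. assert (0 <= q'^2) by nra.
  split; split; nra.
Qed.

Lemma xdiff : Rabs ((1 - q^2 * (sin t)^2) - (1 - q'^2 * (sin t)^2)) <= 2 * Rabs (q - q').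
Proof.
  replace ((1 - q^2 * (sin t)^2) - (1 - q'^2 * (sin t)^2)) with ((q' - q) * (q' + q) * (sin t)^2) by ring.
  rewrite !Rabs_mult. rewrite (Rabs_minus_sym q' q).
  pose proof (sin2_le1 t). rewrite (Rabs_right (sin t ^ 2)) by lra.
  assert (Rabs (q' + q) <= 2). { eapply Rle_trans. apply Rabs_triang. lra. }
  pose proof (Rabs_pos (q - q')). pose proof (Rabs_pos (q' + q)).
  assert (h : Rabs (q - q') * Rabs (q' + q) <= Rabs (q - q') * 2) by (apply Rmult_le_compat_l; auto).
  assert (h2 : 0 <= Rabs (q - q') * Rabs (q' + q)) by (apply Rmult_le_pos; auto).
  nra.
Qed.

Lemma sqrt_lb x : 1 - r^2 <= x <= 1 -> 1 - r^2 <= sqrt x.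
Proof.
  intros. assert (0 <= r^2) by nra. assert (r^2 < 1) by nra. eapply Rle_trans with x. lra. apply sqrt_ge_self. lra.
Qed.

Lemma fE_lip : Rabs (fE q t - fE q' t) <= / (1 - r^2) * Rabs (q - q').
Proof.
  destruct x_bnd as [H1 H2]. pose proof xdiff.
  assert (hm : 0 < 1 - r^2) by nra.
  pose proof (sqrt_lb _ H1). pose proof (sqrt_lb _ H2).
  pose proof (Rabs_sq_diff (fE q t) (fE q' t) (1 - r^2) hm H0 H3).
  unfold fE in *. rewrite !sqrt_sqrt in H4 by lra.
  apply Rmult_le_reg_r with (2 * (1 - r^2)). lra.
  replace (/ (1 - r ^ 2) * Rabs (q - q') * (2 * (1 - r ^ 2))) with (2 * Rabs (q - q')) by (field; lra).
  lra.
Qed.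

Lemma fK_lip : Rabs (fK q t - fK q' t) <= / (1 - r^2)^3 * Rabs (q - q').
Proof.
  destruct x_bnd as [H1 H2].
  assert (hm : 0 < 1 - r^2) by nra.
  pose proof (sqrt_lb _ H1). pose proof (sqrt_lb _ H2).
  pose proof (Rabs_inv_diff _ _ _ hm H H0). unfold fK.
  eapply Rle_trans. apply H3. pose proof fE_lip. unfold fE in H4.
  replace (/ (1 - r ^ 2) ^ 3 * Rabs (q - q')) with ((/ (1 - r ^ 2) * Rabs (q - q')) / ((1 - r^2) * (1 - r^2))) by (field; lra).
  unfold Rdiv. apply Rmult_le_compat_r. left. apply Rinv_0_lt_compat. nra. auto.
Qed.
End Lip.

Lemma K_lip r q q' : 0 <= r < 1 -> Rabs q <= r -> Rabs q' <= r ->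
  Rabs (ellK q - ellK q') <= PI/2 * (/ (1 - r^2)^3 * Rabs (q - q')).
Proof.
  intros Hr Hq Hq'. assert (q^2 < 1 /\ q'^2 < 1) as [h1 h2].
  { destruct (sq_le r q q' Hq Hq'). split; nra. }
  unfold ellK, ellF. fold (fK q). fold (fK q').
  rewrite <- (Rmult_1_l (RInt (fK q) 0 (PI/2))).
  rewrite <- RInt_lin by (intros; apply fK_cont; auto).
  replace (PI / 2 * (/ (1 - r ^ 2) ^ 3 * Rabs (q - q'))) with ((PI/2 - 0) * (/ (1 - r ^ 2) ^ 3 * Rabs (q - q'))) by ring.
  apply abs_RInt_le_const. pose proof PI2_1; lra.
  apply G_ex. apply cont_lin; intros; apply fK_cont; auto.
  intros. rewrite Rmult_1_l. apply fK_lip; auto.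
Qed.

Lemma Ec_lip r q q' : 0 <= r < 1 -> Rabs q <= r -> Rabs q' <= r ->
  Rabs (ellEc q - ellEc q') <= PI/2 * (/ (1 - r^2) * Rabs (q - q')).
Proof.
  intros Hr Hq Hq'. assert (q^2 < 1 /\ q'^2 < 1) as [h1 h2].
  { destruct (sq_le r q q' Hq Hq'). split; nra. }
  unfold ellEc, ellE. fold (fE q). fold (fE q').
  rewrite <- (Rmult_1_l (RInt (fE q) 0 (PI/2))).
  rewrite <- RInt_lin by (intros; apply fE_cont; auto).
  replace (PI / 2 * (/ (1 - r ^ 2) * Rabs (q - q'))) with ((PI/2 - 0) * (/ (1 - r ^ 2) * Rabs (q - q'))) by ring.
  apply abs_RInt_le_const. pose proof PI2_1; lra.
  apply G_ex. apply cont_lin; intros; apply fE_cont; auto.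
  intros. rewrite Rmult_1_l. apply fE_lip; auto.
Qed.

Lemma abs_lt1_sq q : Rabs q < 1 -> q^2 < 1.
Proof. intros. rewrite <- (pow2_abs q). pose proof (Rabs_pos q). nra. Qed.

Lemma par_cont (h : R -> R) (C : R -> R) q0 : Rabs q0 < 1 ->
  (forall r q q', 0 <= r < 1 -> Rabs q <= r -> Rabs q' <= r -> Rabs (h q - h q') <= PI/2 * (C r * Rabs (q - q'))) ->
  (forall r, 0 <= r < 1 -> 0 <= C r) ->
  continuity_pt h q0.
Proof.
  intros Hq0 HL HC. set (r := (1 + Rabs q0)/2). pose proof (Rabs_pos q0).
  apply lip_cont with ((1 - Rabs q0)/2) (PI/2 * C r). lra.
  apply Rmult_le_pos. pose proof PI_RGT_0; lra. apply HC; unfold r; lra.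
  intros q Hq. rewrite Rmult_assoc. apply HL. unfold r; lra.
  - assert (Rabs q <= Rabs q0 + Rabs (q - q0)).
    { replace q with (q0 + (q - q0)) at 1 by ring. apply Rabs_triang. }
    unfold r; lra.
  - unfold r; lra.
Qed.

Lemma K_cont q0 : Rabs q0 < 1 -> continuity_pt ellK q0.
Proof.
  intros H. apply par_cont with (C := fun r => / (1 - r^2)^3); auto.
  intros; apply K_lip; auto.
  intros r Hr. left. apply Rinv_0_lt_compat. apply pow_lt. nra.
Qed.

Lemma Ec_cont q0 : Rabs q0 < 1 -> continuity_pt ellEc q0.
Proof.
  intros H. apply par_cont with (C := fun r => / (1 - r^2)); auto.
  intros; apply Ec_lip; auto.
  intros r Hr. left. apply Rinv_0_lt_compat. nra.
Qed.

Lemma K_ge q : q^2 < 1 -> PI/2 <= ellK q.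
Proof.
  intros Hq. pose proof PI2_1. pose proof (F_diff q Hq 0 (PI/2) ltac:(lra)).
  rewrite F_0 in H0 by auto. unfold ellK. lra.
Qed.

Lemma Ec_bnd q : q^2 < 1 -> (1 - q^2) * (PI/2) <= ellEc q <= PI/2.
Proof.
  intros Hq. pose proof PI2_1. pose proof (E_diff q Hq 0 (PI/2) ltac:(lra)).
  rewrite E_0 in H0 by auto. unfold ellEc. split; [|lra].
  rewrite ellE_eq. replace (RInt (fE q) 0 (PI/2)) with (RInt (fE q) 0 (PI/2) - RInt (fE q) 0 0).
  2:{ rewrite (@RInt_point R_CompleteNormedModule). unfold zero; simpl; ring. }
  rewrite G_chasles by (intros; apply fE_cont; auto).
  replace ((1 - q^2) * (PI/2)) with ((1 - q^2) * (PI/2 - 0)) by ring.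
  apply G_lb; [intros; apply fE_cont; auto| |lra].
  intros t _. unfold fE. pose proof (dn2_bnd q t Hq). eapply Rle_trans. 2: apply sqrt_ge_self.
  lra. assert (0 <= q^2) by nra. lra.
Qed.

Lemma D_eq q : q^2 < 1 -> 2 * ellEc q - ellK q = RInt (fun t => 2 * fE q t - fK q t) 0 (PI/2).
Proof.
  intros Hq. rewrite RInt_lin by (intros; first [apply fE_cont | apply fK_cont]; auto). reflexivity.
Qed.

Lemma x_mono q q' t : 0 <= q <= q' -> 1 - q'^2 * (sin t)^2 <= 1 - q^2 * (sin t)^2.
Proof. intros. pose proof (sin2_le1 t). assert (q^2 <= q'^2) by nra. nra. Qed.

Lemma K_mono q q' : 0 <= q <= q' -> q' < 1 -> ellK q <= ellK q'.
Proof.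
  intros H H1. assert (q'^2 < 1) by nra. assert (q^2 < 1) by nra.
  unfold ellK, ellF. fold (fK q). fold (fK q'). pose proof PI2_1.
  apply RInt_le. lra. apply G_ex; intros; apply fK_cont; auto. apply G_ex; intros; apply fK_cont; auto.
  intros t _. unfold fK. pose proof (x_mono q q' t H). pose proof (dn2_bnd q' t H0).
  apply Rinv_le_contravar. apply sqrt_lt_R0; lra. apply sqrt_le_1_alt; lra.
Qed.

Lemma D_mono q q' : 0 <= q <= q' -> q' < 1 -> 2 * ellEc q' - ellK q' <= 2 * ellEc q - ellK q.
Proof.
  intros H H1. assert (q'^2 < 1) by nra. assert (q^2 < 1) by nra.
  rewrite !D_eq by auto. pose proof PI2_1.
  apply RInt_le. lra. apply G_ex; apply cont_lin; intros; first [apply fE_cont|apply fK_cont]; auto.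
  apply G_ex; apply cont_lin; intros; first [apply fE_cont|apply fK_cont]; auto.
  intros t _. unfold fK, fE. pose proof (x_mono q q' t H). pose proof (dn2_bnd q' t H0).
  assert (0 < sqrt (1 - q' ^ 2 * sin t ^ 2)) by (apply sqrt_lt_R0; lra).
  assert (sqrt (1 - q' ^ 2 * sin t ^ 2) <= sqrt (1 - q ^ 2 * sin t ^ 2)) by (apply sqrt_le_1_alt; lra).
  assert (/ sqrt (1 - q ^ 2 * sin t ^ 2) <= / sqrt (1 - q' ^ 2 * sin t ^ 2)) by (apply Rinv_le_contravar; lra).
  lra.
Qed.

Lemma lb_aux A c : 0 < A <= 1 -> 0 <= c -> c <= 2 * A^2 - 1 -> c <= 2 * A - / A.
Proof.
  intros. replace (2 * A - / A) with ((2 * A^2 - 1) / A) by (field; lra).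
  apply Rmult_le_reg_r with A. lra. unfold Rdiv. rewrite Rmult_assoc, Rinv_l by lra. nra.
Qed.

Lemma D_pos q : q^2 <= 1/2 -> 0 < 2 * ellEc q - ellK q.
Proof.
  intros Hq. assert (Hq1 : q^2 < 1) by lra. rewrite D_eq by auto.
  set (g := fun t => 2 * fE q t - fK q t).
  assert (gc : forall t, continuous g t) by (apply cont_lin; intros; first [apply fE_cont|apply fK_cont]; auto).
  pose proof PI2_1.
  rewrite <- (RInt_Chasles g 0 (1/2) (PI/2)) by (apply G_ex; auto).
  unfold plus; simpl.
  assert (Hg : forall t, 0 <= q^2 -> (sin t)^2 <= 1/4 -> 3/4 <= g t).
  { intros t h0 hs. unfold g, fE, fK. pose proof (dn2_bnd q t Hq1).
    set (x := 1 - q ^ 2 * sin t ^ 2) in *.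
    assert (0 < sqrt x) by (apply sqrt_lt_R0; lra).
    assert (sqrt x <= 1) by (apply Rle_trans with (sqrt 1); [apply sqrt_le_1_alt; lra | rewrite sqrt_1; lra]).
    apply lb_aux. lra. lra. rewrite <- Rsqr_pow2, Rsqr_sqrt by lra. unfold x; nra. }
  assert (Hg2 : forall t, 0 <= g t).
  { intros t. unfold g, fE, fK. pose proof (dn2_bnd q t Hq1). pose proof (sin2_le1 t).
    assert (0 <= q^2) by nra.
    set (x := 1 - q ^ 2 * sin t ^ 2) in *.
    assert (0 < sqrt x) by (apply sqrt_lt_R0; lra).
    assert (sqrt x <= 1) by (apply Rle_trans with (sqrt 1); [apply sqrt_le_1_alt; lra | rewrite sqrt_1; lra]).
    apply lb_aux. lra. lra. rewrite <- Rsqr_pow2, Rsqr_sqrt by lra. unfold x; nra. }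
  assert (3/4 * (1/2 - 0) <= RInt g 0 (1/2)).
  { apply G_lb; auto. intros t Ht. apply Hg. nra.
    replace (sin t ^ 2) with (sin (- t) ^ 2) by (rewrite sin_neg; ring). apply sin2_small; lra. lra. }
  assert (0 * (PI/2 - 1/2) <= RInt g (1/2) (PI/2)).
  { apply G_lb; auto. lra. }
  lra.
Qed.

Lemma cos_le_shift t : 0 <= t <= PI/2 -> 0 <= cos t <= PI/2 - t.
Proof.
  intros Ht. split. apply cos_ge_0; lra.
  rewrite <- sin_shift. destruct (Req_dec t (PI/2)) as [E|E].
  rewrite E. replace (PI/2 - PI/2) with 0 by ring. rewrite sin_0; lra.
  left. apply sin_lt_x. lra.
Qed.

Lemma log_int d : 0 < d ->
  is_RInt (fun t => / (d + (PI/2 - t))) 0 (PI/2) (ln (d + PI/2) - ln d).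
Proof.
  intros Hd. pose proof PI2_1.
  assert (H2 : is_RInt (fun t => / (d + (PI/2 - t))) 0 (PI/2)
     (minus (- ln (d + (PI/2 - PI/2))) (- ln (d + (PI/2 - 0))))).
  { apply (@is_RInt_derive R_CompleteNormedModule (fun t => - ln (d + (PI/2 - t)))).
    - intros x Hx. rewrite Rmin_left, Rmax_right in Hx by lra.
      auto_derive. lra. field. lra.
    - intros x Hx. rewrite Rmin_left, Rmax_right in Hx by lra.
      apply (@ex_derive_continuous R_AbsRing R_NormedModule). auto_derive. lra. }
  unfold minus, plus, opp in H2; simpl in H2.
  assert (e1 : d + (PI/2 - PI/2) = d) by ring. assert (e2 : d + (PI/2 - 0) = d + PI/2) by ring.
  rewrite e1, e2 in H2. replace (ln (d + PI / 2) - ln d) with (- ln d + - - ln (d + PI / 2)) by ring.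
  exact H2.
Qed.

Lemma K_unbounded M : exists q, 0 <= q < 1 /\ M < ellK q.
Proof.
  set (d := / (2 * (1 + exp M))).
  pose proof (exp_pos M).
  assert (Hd : 0 < d) by (apply Rinv_0_lt_compat; lra).
  assert (Hd1 : d < 1/2).
  { unfold d. replace (1/2) with (/ 2) by field. apply Rinv_lt_contravar; lra. }
  exists (sqrt (1 - d^2)).
  assert (Hq2 : (sqrt (1 - d^2))^2 = 1 - d^2).
  { rewrite <- Rsqr_pow2, Rsqr_sqrt; auto. nra. }
  split. split. apply sqrt_pos.
  apply Rlt_le_trans with (sqrt 1). apply sqrt_lt_1_alt. split; nra. rewrite sqrt_1; lra.
  set (q := sqrt (1 - d^2)) in *.
  assert (Hq : q^2 < 1) by nra.
  pose proof PI2_1.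
  assert (HI := log_int d Hd).
  assert (Hle : ln (d + PI/2) - ln d <= ellK q).
  { rewrite <- (is_RInt_unique _ _ _ _ HI).
    unfold ellK, ellF. fold (fK q).
    apply RInt_le. lra. exists (ln (d + PI/2) - ln d); auto.
    apply G_ex; intros; apply fK_cont; auto.
    intros t Ht. unfold fK. rewrite Hq2.
    pose proof (cos_le_shift t ltac:(lra)). pose proof (sin2_le1 t).
    assert (Hx : 1 - (1 - d ^ 2) * sin t ^ 2 = (cos t)^2 + d^2 * (sin t)^2).
    { pose proof (sin2_cos2 t). unfold Rsqr in H3. nra. }
    assert (Hx2 : (cos t)^2 + d^2 * (sin t)^2 <= (d + (PI/2 - t))^2) by nra.
    assert (Hp : 0 < 1 - (1 - d ^ 2) * sin t ^ 2).
    { pose proof (dn2_bnd q t Hq). rewrite Hq2 in H3. lra. }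
    apply Rinv_le_contravar. apply sqrt_lt_R0; auto.
    rewrite <- (sqrt_square (d + (PI/2 - t))) by lra. apply sqrt_le_1_alt. lra. }
  assert (Hln : M < ln (d + PI/2) - ln d).
  { rewrite <- ln_div by lra. rewrite <- (ln_exp M) at 1. apply ln_increasing. auto.
    replace ((d + PI/2) / d) with (1 + PI * (1 + exp M)) by (unfold d; field; lra).
    pose proof PI_RGT_0. nra. }
  lra.
Qed.

Lemma poly_cpt (p : R -> R) x : ex_derive p x -> continuity_pt p x.
Proof. intros H. apply continuity_pt_filterlim. apply (@ex_derive_continuous R_AbsRing R_NormedModule). auto. Qed.

Lemma D_cont q : Rabs q < 1 -> continuity_pt (fun q => 2 * ellEc q - ellK q) q.
Proof.
  intros H. apply cpt_minus. apply cpt_mult. apply cpt_const. apply Ec_cont; auto. apply K_cont; auto.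
Qed.

Lemma gg_cont q : Rabs q < 1 -> continuity_pt gg q.
Proof.
  intros H. unfold gg.
  apply (cpt_mult (fun q => 8 * (2 * ellEc q - ellK q) ^ 2) (fun q => 2 * q^2 - 1)).
  - apply cpt_mult. apply cpt_const.
    apply continuity_pt_locally_ext with (f := fun q => (2 * ellEc q - ellK q) * (2 * ellEc q - ellK q)) (a := 1).
    lra. intros; ring. apply cpt_mult; apply D_cont; auto.
  - apply poly_cpt. auto_derive. auto.
Qed.

Lemma ff_cont q : Rabs q < 1 -> continuity_pt ff q.
Proof.
  intros H. unfold ff.
  apply (cpt_plus (fun q => (4 * q^4 - 5 * q^2 + 1) * ellK q) (fun q => (-8 * q^4 + 8 * q^2 - 1) * ellEc q)).
  - apply cpt_mult. apply poly_cpt; auto_derive; auto. apply K_cont; auto.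
  - apply cpt_mult. apply poly_cpt; auto_derive; auto. apply Ec_cont; auto.
Qed.

Lemma qstar_spec : 0 < qstar < 1 /\ 2 * ellEc qstar - ellK qstar = 0.
Proof.
  apply (epsilon_spec (inhabits 0) (fun q => 0 < q < 1 /\ 2 * ellEc q - ellK q = 0)).
  destruct (K_unbounded (PI + 1)) as [qM [HqM HK]].
  assert (HqM2 : qM^2 < 1) by nra.
  pose proof (Ec_bnd qM HqM2).
  destruct (ivt_down (fun q => 2 * ellEc q - ellK q) 0 qM 0) as [q [Hq HD]].
  - lra.
  - intros; apply D_cont. rewrite Rabs_right; lra.
  - pose proof (D_pos 0 ltac:(lra)). simpl. lra.
  - exists q. split; auto. split; [|lra].
    destruct (Req_dec q 0) as [E|E]. rewrite E in HD. pose proof (D_pos 0 ltac:(lra)). simpl in HD. lra.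
    lra.
Qed.

Definition s2 := 1 / sqrt 2.
Lemma s2_sq : s2 ^ 2 = 1/2.
Proof.
  unfold s2. assert (sqrt 2 * sqrt 2 = 2) by (apply sqrt_sqrt; lra).
  assert (0 < sqrt 2) by (apply sqrt_lt_R0; lra). field_simplify. rewrite <- Rsqr_pow2. unfold Rsqr. rewrite H. field.
  lra.
Qed.
Lemma s2_pos : 0 < s2.
Proof. unfold s2. apply Rdiv_lt_0_compat. lra. apply sqrt_lt_R0; lra. Qed.

Lemma qstar_big : 1/2 < qstar^2.
Proof.
  destruct qstar_spec as [H1 H2]. destruct (Rlt_le_dec (1/2) (qstar^2)); auto.
  pose proof (D_pos qstar r). lra.
Qed.

Lemma D_nonpos q : qstar <= q < 1 -> 2 * ellEc q - ellK q <= 0.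
Proof.
  intros H. destruct qstar_spec as [H1 H2]. pose proof (D_mono qstar q ltac:(lra) ltac:(lra)). lra.
Qed.

Lemma qhat_spec : 1 / sqrt 2 <= qhat < 1 /\ ff qhat = 0.
Proof.
  apply (epsilon_spec (inhabits 0) (fun q => 1 / sqrt 2 <= q < 1 /\ ff q = 0)).
  destruct qstar_spec as [[H1 H2] H3]. pose proof qstar_big. pose proof s2_sq. pose proof s2_pos.
  assert (Hs : s2 <= qstar) by nra.
  destruct (ivt_down ff s2 qstar 0) as [q [Hq Hf]].
  - auto.
  - intros; apply ff_cont. rewrite Rabs_right; lra.
  - split.
    + assert (Hqs : qstar^2 < 1) by nra. pose proof (Ec_bnd qstar Hqs). pose proof PI2_1.
      assert (0 < ellEc qstar) by nra.
      unfold ff. replace (ellK qstar) with (2 * ellEc qstar) by lra.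
      replace (qstar^4) with ((qstar^2)^2) by ring. nra.
    + assert (s2^2 < 1) by lra. pose proof (D_pos s2 ltac:(lra)).
      unfold ff. replace (s2^4) with ((s2^2)^2) by ring. rewrite H0. lra.
  - exists q. fold s2. split; [split|]; auto; lra.
Qed.

Section Main.
Variables c : R.
Hypothesis Hc : 0 < c.

Lemma q3_spec : qstar < q3 c < 1 /\ gg (q3 c) = c.
Proof.
  apply (epsilon_spec (inhabits 0) (fun q => qstar < q < 1 /\ gg q = c)).
  destruct qstar_spec as [[H1 H2] H3]. pose proof qstar_big.
  set (e := 2 * qstar^2 - 1). assert (He : 0 < e) by (unfold e; lra).
  destruct (K_unbounded (Rmax (ellK qstar) (PI + 1 + c / e))) as [qM [HqM HK]].
  assert (HK1 := Rmax_l (ellK qstar) (PI + 1 + c / e)).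
  assert (HK2 := Rmax_r (ellK qstar) (PI + 1 + c / e)).
  assert (Hlt : qstar < qM).
  { destruct (Rlt_le_dec qstar qM); auto. pose proof (K_mono qM qstar ltac:(lra) ltac:(lra)). lra. }
  assert (HqM2 : qM^2 < 1) by nra.
  pose proof (Ec_bnd qM HqM2).
  assert (Hgg : c <= gg qM).
  { unfold gg. assert (Hcd : 0 <= c / e) by (apply Rdiv_le_0_compat; lra).
    set (X := ellK qM - 2 * ellEc qM).
    assert (HX : 1 + c / e <= X) by (unfold X; lra).
    replace ((2 * ellEc qM - ellK qM)^2) with (X^2) by (unfold X; ring).
    assert (Ha : e <= 2 * qM^2 - 1) by (unfold e; nra).
    assert (X^2 >= X) by nra.
    assert (c = (c / e) * e) by (field; lra).
    assert (X * e <= X^2 * (2 * qM^2 - 1)) by nra.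
    assert (c / e * e <= X * e) by nra. nra. }
  destruct (ivt_up gg qstar qM c) as [q [Hq Hg]].
  - lra.
  - intros; apply gg_cont. rewrite Rabs_right; lra.
  - split; auto. unfold gg. rewrite H3. lra.
  - exists q. split; auto. split; [|lra].
    destruct (Req_dec q qstar) as [E|E]. rewrite E in Hg. unfold gg in Hg. rewrite H3 in Hg. lra. lra.
Qed.

Hypothesis Hch : c <= lamhat.

Lemma qhat_lt : qhat < qstar.
Proof.
  destruct qstar_spec as [[H1 H2] H3]. destruct qhat_spec as [[H4 H5] H6].
  fold s2 in H4. pose proof s2_sq. pose proof s2_pos.
  destruct (Rlt_le_dec qhat qstar) as [h|h]; auto. exfalso.
  pose proof (D_nonpos qhat ltac:(lra)) as HDn. pose proof qstar_big.
  assert (Ha : 1/2 <= qhat^2) by nra.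
  assert (Hq1 : qhat^2 < 1) by nra.
  pose proof (Ec_bnd qhat Hq1). pose proof PI2_1.
  assert (HE : 0 < ellEc qhat) by nra.
  set (a := qhat^2) in *.
  unfold ff in H6. replace (qhat^4) with (a^2) in H6 by (unfold a; ring). fold a in H6.
  assert (Hco : (1 - a) * (1 - 4 * a) <= 0) by nra.
  assert (h1 : (1 - a) * (1 - 4 * a) * ellK qhat <= (1 - a) * (1 - 4 * a) * (2 * ellEc qhat)) by nra.
  assert (h2 : 0 <= ellEc qhat * (1 - 2 * a)).
  { replace (ellEc qhat * (1 - 2 * a)) with ((1 - a) * (1 - 4 * a) * (2 * ellEc qhat) + (-8 * a^2 + 8 * a - 1) * ellEc qhat) by ring.
    replace (4 * a ^ 2 - 5 * a + 1) with ((1 - a) * (1 - 4 * a)) in H6 by ring.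
    set (P := (1 - a) * (1 - 4 * a)) in *. set (Q := -8 * a^2 + 8 * a - 1) in *.
    set (P1 := P * ellK qhat) in *. set (P2 := P * (2 * ellEc qhat)) in *. set (Q1 := Q * ellEc qhat) in *.
    lra. }
  assert (Ha2 : a = 1/2) by nra.
  unfold lamhat, gg in Hch. fold a in Hch. rewrite Ha2 in Hch. lra.
Qed.

Lemma q1_spec : 1 / sqrt 2 < q1 c <= qhat /\ gg (q1 c) = c.
Proof.
  apply (epsilon_spec (inhabits 0) (fun q => 1 / sqrt 2 < q <= qhat /\ gg q = c)). fold s2.
  destruct qhat_spec as [[H4 H5] H6]. fold s2 in H4. pose proof s2_sq as Hs2. pose proof s2_pos.
  assert (g0 : gg s2 = 0). { unfold gg. rewrite Hs2. field. }
  destruct (ivt_up gg s2 qhat c) as [q [Hq Hg]]; auto.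
  - intros; apply gg_cont. rewrite Rabs_right; lra.
  - unfold lamhat in Hch. lra.
  - exists q. split; auto. split; [|lra].
    destruct (Req_dec q s2) as [E|E]. rewrite E in Hg. lra. lra.
Qed.

Lemma q2_spec : qhat <= q2 c < qstar /\ gg (q2 c) = c.
Proof.
  apply (epsilon_spec (inhabits 0) (fun q => qhat <= q < qstar /\ gg q = c)).
  destruct qhat_spec as [[H4 H5] H6]. fold s2 in H4. pose proof s2_pos.
  destruct qstar_spec as [[H1 H2] H3]. pose proof qhat_lt.
  assert (g0 : gg qstar = 0) by (unfold gg; rewrite H3; ring).
  destruct (ivt_down gg qhat qstar c) as [q [Hq Hg]]; auto.
  - lra.
  - intros; apply gg_cont. rewrite Rabs_right; lra.
  - unfold lamhat in Hch. lra.
  - exists q. split; auto. split; [lra|].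
    destruct (Req_dec q qstar) as [E|E]. rewrite E in Hg. lra. lra.
Qed.
End Main.

Lemma gg_D q c : 0 < c -> gg q = c -> 2 * ellEc q - ellK q <> 0.
Proof. intros Hc Hg E. unfold gg in Hg. rewrite E in Hg. lra. Qed.

Theorem lemma2p9 (lam l : R) (Hlam : 0 < lam) (Hl : 0 < l) :
  (lam * l ^ 2 <= lamhat ->
     symmetric_curve (gamma_sarc lam l) (L_sarc lam l) l /\
     symmetric_curve (gamma_larc lam l) (L_larc lam l) l) /\
  (symmetric_curve (gamma_loop lam l) (L_loop lam l) l /\
   exists s, 0 < s < L_loop lam l / 2 /\
     gamma_loop lam l s = gamma_loop lam l (L_loop lam l - s)).
Proof.
  assert (Hc : 0 < lam * l ^ 2) by (apply Rmult_lt_0_compat; auto; apply pow_lt; auto).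
  set (c := lam * l ^ 2) in *.
  pose proof s2_pos. pose proof qstar_spec as [[H1 H2] H3].
  split.
  - intros Hch. split.
    + destruct (q1_spec c Hc Hch) as [[h1 h2] h3]. fold s2 in h1.
      destruct qhat_spec as [[H4 H5] H6].
      assert (Hq : (q1 c)^2 < 1) by nra.
      exact (arc_sym (q1 c) l Hq Hl (gg_D _ _ Hc h3)).
    + destruct (q2_spec c Hc Hch) as [[h1 h2] h3].
      destruct qhat_spec as [[H4 H5] H6]. fold s2 in H4.
      assert (Hq : (q2 c)^2 < 1) by nra.
      exact (arc_sym (q2 c) l Hq Hl (gg_D _ _ Hc h3)).
  - destruct (q3_spec c Hc) as [[h1 h2] h3].
    assert (Hq : (q3 c)^2 < 1) by nra.
    pose proof (gg_D _ _ Hc h3). pose proof (D_nonpos (q3 c) ltac:(lra)).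
    split.
    + exact (loop_sym (q3 c) l Hq Hl ltac:(intro; lra)).
    + exact (loop_cross (q3 c) l Hq Hl ltac:(lra)).
Qed.
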